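(* Let $\mathcal{S}$ be a finite set of road segments and $y_1,\dots,y_N$ (collectively $y_{[N]}$) the routes of $N$ historical trips, each a nonempty set of distinct segments. For each $n$ and $s\in y_n$ one observes $T'_{n,s}=\theta_s+\varepsilon_{n,s}$, where the $\theta_s$ are i.i.d. with mean $\mu$ and variance $\tau^2$, independent of the errors; for each $n$ the errors $(\varepsilon_{n,s})_{s\in y_n}$ have mean $0$ and covariances $\sigma_{s,t}$; errors from different trips are independent. Fix a route $y\subseteq\mathcal{S}$. (1) Let $\mathscr{S}_y$ be a partition of $y$ into nonempty disjoint sets (super-segments), and for a set $S$ of segments let $N_S=|\{n: S\subseteq y_n\}|$. For functions $\phi_S:\mathbb{Z}_{\ge0}\to\mathbb{R}$ with $\phi_S(0)=0$, consider the generalized segment-based estimator $$\hat\Theta^{(\mathrm{g\text{-}seg})}_y=\sum_{S\in\mathscr{S}_y}\Big[(1-\phi_S(N_S))|S|\mu+\phi_S(N_S)\frac{\sum_{n:S\subseteq y_n}\sum_{s\in S}T'_{n,s}}{N_S}\Big].$$ Its integrated risk is $$R\big(\hat\Theta^{(\mathrm{g\text{-}seg})}_y\mid y_{[N]}\big)=\sum_{S,T\in\mathscr{S}_y}\frac{N_{S\cup T}}{N_SN_T}\phi_S(N_S)\phi_T(N_T)\Big(\sum_{s\in S,t\in T}\sigma_{s,t}\Big)+\sum_{S\in\mathscr{S}_y}(1-\phi_S(N_S))^2|S|\tau^2.$$ (2) Let $\delta(y)$ be a set of historical routes (the neighborhood of $y$), $M_{\delta(y)}=\sum_{n=1}^N\mathbf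 1\{y_n\in\delta(y)\}$, $N^{\delta(y)}_s=|\{n: y_n\in\delta(y), s\in y_n\}|$, $N^{\delta(y)}_{s\cup t}=|\{n: y_n\in\delta(y), s,t\in y_n\}|$, $\mathcal{S}_{\delta(y)}=\bigcup_{y'\in\delta(y)}y'$, and $\bar y_{\delta(y)}=\sum_{n:y_n\in\delta(y)}|y_n|/M_{\delta(y)}$. For a function $\phi_{\delta(y)}:\mathbb{Z}_{\ge0}\to\mathbb{R}$ with $\phi_{\delta(y)}(0)=0$, consider the route-based estimator $$\hat\Theta^{(\mathrm{route})}_y=(1-\phi_{\delta(y)}(M_{\delta(y)}))|y|\mu+\phi_{\delta(y)}(M_{\delta(y)})\frac{\sum_{n:y_n\in\delta(y)}\sum_{s\in y_n}T'_{n,s}}{M_{\delta(y)}}.$$ Writing $\phi=\phi_{\delta(y)}(M_{\delta(y)})$ and $M=M_{\delta(y)}$, its integrated risk is $$R\big(\hat\Theta^{(\mathrm{route})}_y\mid y_{[N]}\big)=\Big(\frac{\phi}{M}\Big)^2\Big(\sum_{s,t\in\mathcal{S}_{\delta(y)}}N^{\delta(y)}_{s\cup t}\sigma_{s,t}\Big)+\big(\phi(\bar y_{\delta(y)}-|y|)\mu\big)^2+\sum_{s\in\mathcal{S}_{\delta(y)}\setminus y}\Big(\phi\frac{N^{\delta(y)}_s}{M}\Big)^2\tau^2+\sum_{s\in y}\Big(1-\phi\frac{N^{\delta(y)}_s}{M}\Big)^2\tau^2.$$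
   Context: Convention $0/0=0$. For a route $y$, the integrated risk of an estimator $\hat\Theta_y$ is $R(\hat\Theta_y\mid y_{[N]})=\mathbb{E}[(\hat\Theta_y-\sum_{s\in y}\theta_s)^2\mid y_{[N]}]$, the expectation taken over the errors and the prior distribution of $\theta$, conditional on the historical routes. For $s=t$, $N_{s\cup s}=N_s$ and $N^{\delta(y)}_{s\cup s}=N^{\delta(y)}_s$. No distributional assumption beyond means and covariances is imposed. *)

(* Defs.v *)
From HB Require Import structures.
From mathcomp Require Import all_boot all_order all_algebra.
From mathcomp Require Import all_classical all_reals all_analysis.

Set Implicit Arguments.
Unset Strict Implicit.
Unset Printing Implicit Defensive.

Import Order.TTheory GRing.Theory Num.Theory.
Local Open Scope ring_scope.

Section TravelTime.
Context {d : measure_display} {Omega : measurableType d} {R : realType}.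
Context {S : finType} {N : nat}.

Definition Tobs (theta : S -> Omega -> R) (eps : 'I_N -> S -> Omega -> R)
  (n : 'I_N) (s : S) : Omega -> R := fun w => theta s w + eps n s w.

(* integrated risk E[(est - sum_{s in y} theta_s)^2] (conditional on the
   historical routes, which are deterministic data here) *)
Definition risk (P : probability Omega R) (est : Omega -> R)
  (theta : S -> Omega -> R) (y : {set S}) : \bar R :=
  'E_P[fun w : Omega => ((est w - \sum_(s in y) theta s w) ^+ 2)%R]%E.

Definition NS (yh : 'I_N -> {set S}) (A : {set S}) : nat :=
  #|[set n : 'I_N | A \subset yh n]|.

Definition gseg_est (yh : 'I_N -> {set S}) (Sy : {set {set S}})
  (phi : {set S} -> nat -> R) (mu : R)
  (theta : S -> Omega -> R) (eps : 'I_N -> S -> Omega -> R) : Omega -> R :=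
  fun w => \sum_(A in Sy)
    ((1 - phi A (NS yh A)) * #|A|%:R * mu
     + phi A (NS yh A) *
       ((\sum_(n : 'I_N | A \subset yh n) \sum_(s in A) Tobs theta eps n s w)
        / (NS yh A)%:R)).

Definition Mdel (yh : 'I_N -> {set S}) (delta : {set {set S}}) : nat :=
  #|[set n : 'I_N | yh n \in delta]|.

Definition Ndel1 (yh : 'I_N -> {set S}) (delta : {set {set S}}) (s : S) : nat :=
  #|[set n : 'I_N | (yh n \in delta) && (s \in yh n)]|.

Definition Ndel2 (yh : 'I_N -> {set S}) (delta : {set {set S}}) (s t : S) : nat :=
  #|[set n : 'I_N | [&& yh n \in delta, s \in yh n & t \in yh n]]|.

Definition Sdel (delta : {set {set S}}) : {set S} :=
  \bigcup_(y' in delta) y'.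

Definition ybar (yh : 'I_N -> {set S}) (delta : {set {set S}}) : R :=
  (\sum_(n : 'I_N | yh n \in delta) #|yh n|%:R) / (Mdel yh delta)%:R.

Definition route_est (yh : 'I_N -> {set S}) (delta : {set {set S}})
  (phid : nat -> R) (y : {set S}) (mu : R)
  (theta : S -> Omega -> R) (eps : 'I_N -> S -> Omega -> R) : Omega -> R :=
  fun w =>
    (1 - phid (Mdel yh delta)) * #|y|%:R * mu
    + phid (Mdel yh delta) *
      ((\sum_(n : 'I_N | yh n \in delta) \sum_(s in yh n) Tobs theta eps n s w)
       / (Mdel yh delta)%:R).

Definition moment_model (P : probability Omega R) (yh : 'I_N -> {set S})
  (theta : S -> Omega -> R) (eps : 'I_N -> S -> Omega -> R)
  (mu tau : R) (sigma : S -> S -> R) : Prop :=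
  (forall s, theta s \in Lfun P 2%:E) /\
      (forall n s, s \in yh n -> eps n s \in Lfun P 2%:E) /\
      (forall s, ('E_P[theta s])%E = mu%:E) /\
      (forall s, covariance P (theta s) (theta s) = (tau ^+ 2)%:E) /\
      (forall s t, s != t -> covariance P (theta s) (theta t) = 0%E) /\
      (forall n s, s \in yh n -> ('E_P[eps n s] = 0)%E) /\
      (forall n s t, s \in yh n -> t \in yh n ->
          covariance P (eps n s) (eps n t) = (sigma s t)%:E) /\
      (forall n m s t, n != m -> s \in yh n -> t \in yh m ->
          covariance P (eps n s) (eps m t) = 0%E) /\
      (forall n s t, s \in yh n -> covariance P (theta t) (eps n s) = 0%E).

End TravelTime.

(* Main.v *)
Require Import Defs.
From HB Require Import structures.
From mathcomp Require Import all_boot all_order all_algebra.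
From mathcomp Require Import all_classical all_reals all_analysis.
From mathcomp Require Import ring.

Import Order.TTheory GRing.Theory Num.Theory.
Local Open Scope ring_scope.

Section Infra.
Context {d : measure_display} {Omega : measurableType d} {R : realType}.
Context (P : probability Omega R).
Local Notation L2 := (Lfun P 2%:E).

Definition Cv (X Y : Omega -> R) : R := fine (covariance P X Y).
Definition Ev (X : Omega -> R) : R := fine ('E_P[X])%E.

Let Pfin : P setT \is a fin_num. Proof. exact: fin_num_measure. Qed.
Let l12 : (1 <= 2%:E :> \bar R)%E. Proof. by rewrite lee1n. Qed.

Lemma L2_add (X Y : Omega -> R) : X \in L2 -> Y \in L2 ->
  (fun w => X w + Y w) \in L2.
Proof. move=> hX hY. exact (@rpredD _ (hoelder_Lfun__canonical__Algebra_AddClosed P l12) X Y hX hY). Qed.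

Lemma L2_scale a (X : Omega -> R) : X \in L2 -> (fun w => a * X w) \in L2.
Proof.
move=> hX. have h := @Lfun_scale _ _ _ P X a 2 (ler1n R 2) hX.
rewrite (_ : (fun w => a * X w) = a \o* X) //; apply/funext => w /=; exact: mulrC.
Qed.

Lemma oscaleE a (X : Omega -> R) : (fun w => a * X w) = a \o* X.
Proof. apply/funext => w /=; exact: mulrC. Qed.

Lemma L2_cst a : (fun _ : Omega => a) \in L2.
Proof. exact: Lfun_cst. Qed.

Lemma L2_sum (I : Type) (r : seq I) (p : pred I) (F : I -> Omega -> R) :
  (forall i, p i -> F i \in L2) ->
  (fun w => \sum_(i <- r | p i) F i w) \in L2.
Proof.
move=> hF; elim: r => [|i r IH].
  under [X in X \in _]funext => w do rewrite big_nil. exact: L2_cst.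
under [X in X \in _]funext => w do rewrite big_cons.
case: (boolP (p i)) => pi; last exact: IH.
exact: L2_add (hF _ pi) IH.
Qed.

Lemma L2_L1 X : X \in L2 -> X \in Lfun P 1.
Proof. exact: Lfun_subset12. Qed.
Arguments L2_L1 {X}.

Lemma Ev_fin {X} : X \in L2 -> ('E_P[X] = (Ev X)%:E)%E.
Proof. by move=> h; rewrite /Ev fineK// expectation_fin_num// L2_L1. Qed.

Lemma Cv_fin {X Y} : X \in L2 -> Y \in L2 -> covariance P X Y = (Cv X Y)%:E.
Proof.
move=> hX hY; rewrite /Cv fineK//.
exact (covariance_fin_num (L2_L1 hX) (L2_L1 hY) (Lfun2_mul_Lfun1 hX hY)).
Qed.

Lemma EvD X Y : X \in L2 -> Y \in L2 -> Ev (fun w => X w + Y w) = Ev X + Ev Y.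
Proof.
move=> hX hY; rewrite /Ev.
have := expectationD (L2_L1 hX) (L2_L1 hY) => /= ->.
by rewrite (Ev_fin hX) (Ev_fin hY).
Qed.

Lemma EvZ a X : X \in L2 -> Ev (fun w => a * X w) = a * Ev X.
Proof.
move=> hX; rewrite /Ev oscaleE.
have := expectationZl a (L2_L1 hX) => /= ->.
by rewrite (Ev_fin hX).
Qed.

Lemma Ev_cst a : Ev (fun _ => a) = a.
Proof. by rewrite /Ev; have := expectation_cst P a => /= ->. Qed.

Lemma Ev_sum (I : Type) (r : seq I) (p : pred I) (F : I -> Omega -> R) :
  (forall i, p i -> F i \in L2) ->
  Ev (fun w => \sum_(i <- r | p i) F i w) = \sum_(i <- r | p i) Ev (F i).
Proof.
move=> hF; elim: r => [|i r IH].
  under [X in Ev X]funext => w do rewrite big_nil. by rewrite Ev_cst big_nil.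
under [X in Ev X]funext => w do rewrite big_cons.
rewrite big_cons; case: (boolP (p i)) => pi; last exact: IH.
by rewrite EvD ?IH //; [exact: hF|exact: L2_sum].
Qed.

Lemma CvC X Y : Cv X Y = Cv Y X.
Proof. by rewrite /Cv covarianceC. Qed.

Lemma CvDl X Y Z : X \in L2 -> Y \in L2 -> Z \in L2 ->
  Cv (fun w => X w + Y w) Z = Cv X Z + Cv Y Z.
Proof.
move=> hX hY hZ; rewrite /Cv.
have := covarianceDl hX hY hZ => /= ->.
by rewrite (Cv_fin hX hZ) (Cv_fin hY hZ).
Qed.

Lemma CvZl a X Z : X \in L2 -> Z \in L2 ->
  Cv (fun w => a * X w) Z = a * Cv X Z.
Proof.
move=> hX hZ; rewrite /Cv oscaleE.
have := covarianceZl a (L2_L1 hX) (L2_L1 hZ) (Lfun2_mul_Lfun1 hX hZ) => /= ->.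
by rewrite (Cv_fin hX hZ).
Qed.

Lemma Cv_cstl a Z : Cv (fun _ => a) Z = 0.
Proof. by rewrite /Cv; have := covariance_cst_l P a Z => /= ->. Qed.

Lemma Cv_suml (I : Type) (r : seq I) (p : pred I) (F : I -> Omega -> R) Z :
  (forall i, p i -> F i \in L2) -> Z \in L2 ->
  Cv (fun w => \sum_(i <- r | p i) F i w) Z = \sum_(i <- r | p i) Cv (F i) Z.
Proof.
move=> hF hZ; elim: r => [|i r IH].
  under [X in Cv X]funext => w do rewrite big_nil. by rewrite Cv_cstl big_nil.
under [X in Cv X]funext => w do rewrite big_cons.
rewrite big_cons; case: (boolP (p i)) => pi; last exact: IH.
by rewrite CvDl ?IH //; [exact: hF|exact: L2_sum].
Qed.

Lemma Cv_sumr (I : Type) (r : seq I) (p : pred I) (F : I -> Omega -> R) Z :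
  (forall i, p i -> F i \in L2) -> Z \in L2 ->
  Cv Z (fun w => \sum_(i <- r | p i) F i w) = \sum_(i <- r | p i) Cv Z (F i).
Proof.
move=> hF hZ; rewrite CvC Cv_suml//; apply: eq_bigr => i _; exact: CvC.
Qed.

Lemma CvDr X Y Z : X \in L2 -> Y \in L2 -> Z \in L2 ->
  Cv Z (fun w => X w + Y w) = Cv Z X + Cv Z Y.
Proof. by move=> *; rewrite CvC CvDl // (CvC X) (CvC Y). Qed.

Lemma CvZr a X Z : X \in L2 -> Z \in L2 ->
  Cv Z (fun w => a * X w) = a * Cv Z X.
Proof. by move=> *; rewrite CvC CvZl // CvC. Qed.

Lemma Cv_cstr a Z : Cv Z (fun _ => a) = 0.
Proof. by rewrite CvC Cv_cstl. Qed.

Lemma Cv_shift a Y : Y \in L2 ->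
  Cv (fun w => a + Y w) (fun w => a + Y w) = Cv Y Y.
Proof.
move=> hY.
have hX : (fun w => a + Y w) \in L2 by apply: L2_add => //; exact: L2_cst.
rewrite CvDl //; last exact: L2_cst.
rewrite Cv_cstl add0r CvDr //; last exact: L2_cst.
by rewrite Cv_cstr add0r.
Qed.

Lemma E_sq X : X \in L2 ->
  ('E_P[fun w => ((X w) ^+ 2)%R] = (Ev X ^+ 2 + Cv X X)%:E)%E.
Proof.
move=> hX.
have h := varianceE hX.
rewrite /variance (Cv_fin hX hX) (Ev_fin hX) in h.
have hX2 : (fun w => X w ^+ 2) \in Lfun P 1.
  have := Lfun2_mul_Lfun1 hX hX.
  by rewrite (_ : (X \* X) = (fun w => X w ^+ 2))// ; apply/funext => w; rewrite expr2.
have e : (X ^+ 2)%R = (fun w => X w ^+ 2).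
  by apply/funext => w; rewrite expr2 /= expr2.
rewrite e in h.
move: h; rewrite -(fineK (expectation_fin_num hX2)) => h.
move: h; rewrite -EFin_expe -EFinB => -[->].
by rewrite addrC subrK.
Qed.

End Infra.

Lemma sum_delta {R : realType} {I : finType} (p : pred I) (n : I) (K : I -> R) :
  \sum_(m | p m) (if n == m then K m else 0) = if p n then K n else 0.
Proof.
rewrite big_mkcond (bigD1 n) //= eqxx big1 ?addr0; first by case: (p n).
move=> m nm; rewrite eq_sym (negbTE nm); by case: (p m).
Qed.

Section Model.
Context {d : measure_display} {Omega : measurableType d} {R : realType}.
Context (P : probability Omega R) {S : finType} {N : nat} (yh : 'I_N -> {set S}).
Context (theta : S -> Omega -> R) (eps : 'I_N -> S -> Omega -> R).
Context (mu tau : R) (sigma : S -> S -> R).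
Local Notation L2 := (Lfun P 2%:E).
Local Notation Cv := (Cv P).
Local Notation Ev := (Ev P).
Context (hth2 : forall s, theta s \in L2)
  (hep2 : forall n s, s \in yh n -> eps n s \in L2)
  (hEth : forall s, Ev (theta s) = mu)
  (hCth : forall s t, Cv (theta s) (theta t) = if s == t then tau ^+ 2 else 0)
  (hEep : forall n s, s \in yh n -> Ev (eps n s) = 0)
  (hCep : forall n m s t, s \in yh n -> t \in yh m ->
      Cv (eps n s) (eps m t) = if n == m then sigma s t else 0)
  (hCte : forall n s t, s \in yh n -> Cv (theta t) (eps n s) = 0).

Definition Th (A : {set S}) w := \sum_(s in A) theta s w.
Definition Ep (A : {set S}) w := \sum_(n | A \subset yh n) \sum_(s in A) eps n s w.

Lemma L2_Th (A : {set S}) : Th A \in L2.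
Proof. apply: L2_sum => s _; exact: hth2. Qed.

Lemma L2_inner (A : {set S}) n : A \subset yh n -> (fun w => \sum_(s in A) eps n s w) \in L2.
Proof. move=> hn; apply: L2_sum => s hs; apply: hep2; exact: (fintype.subsetP hn). Qed.

Lemma L2_Ep (A : {set S}) : Ep A \in L2.
Proof. apply: L2_sum => n hn; exact: L2_inner. Qed.

Lemma Ev_Th (A : {set S}) : Ev (Th A) = #|A|%:R * mu.
Proof.
rewrite /Th Ev_sum; last by move=> s _; exact: hth2.
under eq_bigr => s _ do rewrite hEth.
by rewrite sumr_const mulr_natl.
Qed.

Lemma Ev_Ep (A : {set S}) : Ev (Ep A) = 0.
Proof.
rewrite /Ep Ev_sum; last by move=> n hn; exact: L2_inner.
apply: big1 => n hn; rewrite Ev_sum; last by move=> s hs; apply: hep2; exact: (fintype.subsetP hn).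
apply: big1 => s hs; apply: hEep; exact: (fintype.subsetP hn).
Qed.

Lemma Cv_ThTh (A B : {set S}) : Cv (Th A) (Th B) = \sum_(s in A) if s \in B then tau ^+ 2 else 0.
Proof.
rewrite /Th Cv_suml; last 2 first.
  by move=> s _; exact: hth2.
  exact: L2_Th.
apply: eq_bigr => s _; rewrite Cv_sumr; last 2 first.
  by move=> t _; exact: hth2.
  exact: hth2.
under eq_bigr => t _ do rewrite hCth.
exact (sum_delta (fun t : S => t \in B) s (fun _ => tau ^+ 2)).
Qed.

Lemma Cv_ThEp (A B : {set S}) : Cv (Th A) (Ep B) = 0.
Proof.
rewrite /Th Cv_suml; last 2 first.
  by move=> s _; exact: hth2.
  exact: L2_Ep.
apply: big1 => s _; rewrite /Ep Cv_sumr; last 2 first.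
  by move=> n hn; exact: L2_inner.
  exact: hth2.
apply: big1 => n hn; rewrite Cv_sumr; last 2 first.
  by move=> t ht; apply: hep2; exact: (fintype.subsetP hn).
  exact: hth2.
apply: big1 => t ht; apply: hCte; exact: (fintype.subsetP hn).
Qed.

Lemma Cv_EpTh (A B : {set S}) : Cv (Ep A) (Th B) = 0.
Proof. by rewrite CvC Cv_ThEp. Qed.

Lemma Cv_EpEp (A B : {set S}) : Cv (Ep A) (Ep B) =
  (NS yh (A :|: B))%:R * \sum_(s in A) \sum_(t in B) sigma s t.
Proof.
rewrite /Ep Cv_suml; last 2 first.
  by move=> n hn; exact: L2_inner.
  exact: L2_Ep.
have -> : \sum_(n | A \subset yh n)
     Cv (fun w => \sum_(s in A) eps n s w)
       (fun w => \sum_(n0 | B \subset yh n0) \sum_(s in B) eps n0 s w)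
   = \sum_(n | A \subset yh n)
       if B \subset yh n then \sum_(s in A) \sum_(t in B) sigma s t else 0.
  apply: eq_bigr => n hn.
  rewrite Cv_suml; last 2 first.
    by move=> s hs; apply: hep2; exact: (fintype.subsetP hn).
    exact: L2_Ep.
  have -> : \sum_(s in A) Cv (eps n s)
       (fun w => \sum_(n0 | B \subset yh n0) \sum_(s0 in B) eps n0 s0 w)
     = \sum_(s in A) if B \subset yh n then \sum_(t in B) sigma s t else 0.
    apply: eq_bigr => s hs.
    have hsn : s \in yh n by exact: (fintype.subsetP hn).
    rewrite Cv_sumr; last 2 first.
      by move=> m hm; exact: L2_inner.
      exact: hep2.
    have -> : \sum_(m | B \subset yh m)
         Cv (eps n s) (fun w => \sum_(t in B) eps m t w)
       = \sum_(m | B \subset yh m) if n == m then \sum_(t in B) sigma s t else 0.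
      apply: eq_bigr => m hm.
      rewrite Cv_sumr; last 2 first.
        by move=> t ht; apply: hep2; exact: (fintype.subsetP hm).
        exact: hep2.
      under eq_bigr => t ht do rewrite (hCep _ _ _ _ hsn (fintype.subsetP hm t ht)).
      by case: eqP => // _; rewrite big1.
    exact (sum_delta (fun m => B \subset yh m) n (fun _ => \sum_(t in B) sigma s t)).
  by case: (B \subset yh n); [|rewrite big1].
rewrite -big_mkcondr /=.
rewrite (eq_bigl (fun n => n \in [set n | A :|: B \subset yh n])); last first.
  by move=> n; rewrite inE finset.subUset.
by rewrite sumr_const mulr_natl.
Qed.


Lemma part1 (y : {set S}) (Sy : {set {set S}}) (phi : {set S} -> nat -> R) :
  finset.partition Sy y -> (forall A, A \in Sy -> phi A 0%N = 0) ->
     risk P (gseg_est yh Sy phi mu theta eps) theta y =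
     (\sum_(A in Sy) \sum_(B in Sy)
        ((NS yh (A :|: B))%:R / ((NS yh A)%:R * (NS yh B)%:R)
         * phi A (NS yh A) * phi B (NS yh B)
         * (\sum_(s in A) \sum_(t in B) sigma s t))
      + \sum_(A in Sy) (1 - phi A (NS yh A)) ^+ 2 * #|A|%:R * tau ^+ 2)%:E.
Proof.
move=> hpart hphi0.
move: hpart => /and3P[/eqP hcov htriv _].
pose ph := fun A => phi A (NS yh A).
pose c := fun A => ph A / (NS yh A)%:R.
pose a := \sum_(A in Sy) (1 - ph A) * #|A|%:R * mu.
pose XA := fun A w => (ph A - 1) * Th A w + c A * Ep A w.
pose X := fun w => a + \sum_(A in Sy) XA A w.
have L2Th := L2_Th.
have L2Ep := L2_Ep.
have L2XA : forall A, XA A \in L2.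
  move=> A; apply: L2_add; apply: L2_scale; [exact: L2Th|exact: L2Ep].
have L2Y : (fun w => \sum_(A in Sy) XA A w) \in L2.
  by apply: L2_sum => A _; exact: L2XA.
have L2X : X \in L2 by apply: L2_add => //; exact: L2_cst.
have hpt : forall w, gseg_est yh Sy phi mu theta eps w - \sum_(s in y) theta s w = X w.
  move=> w; rewrite /gseg_est /X -hcov finset.big_trivIset // /a.
  rewrite -big_split -sumrB /=; apply: eq_bigr => A hA.
  have eT : \sum_(n | A \subset yh n) \sum_(s in A) Tobs theta eps n s w
            = (NS yh A)%:R * Th A w + Ep A w.
    rewrite /Tobs /Ep /Th.
    under eq_bigr => n _ do rewrite big_split /=.
    rewrite big_split /=; congr (_ + _).
    rewrite (eq_bigl (fun n => n \in [set n | A \subset yh n])); last first.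
      by move=> n; rewrite inE.
    by rewrite sumr_const mulr_natl.
  rewrite eT /XA /c /ph /Th.
  case: (NS yh A =P 0%N) => hN.
    rewrite hN hphi0 //; ring.
  have hN' : (NS yh A)%:R != 0 :> R by rewrite pnatr_eq0; apply/eqP.
  by field.
rewrite /risk.
have -> : (fun w : Omega => (gseg_est yh Sy phi mu theta eps w
              - \sum_(s in y) theta s w) ^+ 2) = (fun w => (X w) ^+ 2).
  by apply/funext => w; rewrite hpt.
rewrite E_sq //; congr EFin.
have hEXA : forall A, Ev (XA A) = (ph A - 1) * (#|A|%:R * mu).
  move=> A; rewrite /XA EvD; [|apply: L2_scale; exact: L2Th|apply: L2_scale; exact: L2Ep].
  rewrite !EvZ; [|exact: L2Ep|exact: L2Th].
  by rewrite Ev_Th Ev_Ep mulr0 addr0.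
have hEX : Ev X = 0.
  rewrite /X EvD //; last exact: L2_cst.
  rewrite Ev_cst Ev_sum; last by move=> A _; exact: L2XA.
  rewrite /a -big_split /=; apply: big1 => A _; rewrite hEXA; ring.
have hThTh : forall A B, A \in Sy -> B \in Sy ->
    Cv (Th A) (Th B) = if A == B then #|A|%:R * tau ^+ 2 else 0.
  move=> A B hA hB; rewrite Cv_ThTh.
  case: eqP => [<-|nAB].
    rewrite (eq_bigr (fun _ => tau ^+ 2)); last by move=> s ->.
    by rewrite sumr_const mulr_natl.
  have hdis := (finset.trivIsetP htriv) A B hA hB (introN eqP nAB).
  by apply: big1 => s hs; rewrite (disjointFr hdis hs).
have hXAB : forall A B, A \in Sy -> B \in Sy ->
    Cv (XA A) (XA B) =
      (NS yh (A :|: B))%:R / ((NS yh A)%:R * (NS yh B)%:R)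
         * phi A (NS yh A) * phi B (NS yh B)
         * (\sum_(s in A) \sum_(t in B) sigma s t)
      + (if A == B then (1 - phi A (NS yh A)) ^+ 2 * #|A|%:R * tau ^+ 2 else 0).
  move=> A B hA hB.
  have hTA := L2Th A; have hTB := L2Th B; have hEA := L2Ep A; have hEB := L2Ep B.
  rewrite /XA CvDl; [|apply: L2_scale => //|apply: L2_scale => //|exact: L2XA].
  rewrite CvZl //; last exact: L2XA.
  rewrite CvZl //; last exact: L2XA.
  rewrite CvDr; [|apply: L2_scale => //|apply: L2_scale => //|done].
  rewrite CvDr; [|apply: L2_scale => //|apply: L2_scale => //|done].
  rewrite !CvZr //.
  rewrite (hThTh A B hA hB) Cv_ThEp Cv_EpTh.
  rewrite Cv_EpEp.
  rewrite /c /ph invfM.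
  case: eqP => [<-|_].
    rewrite finset.setUid; ring.
  ring.
rewrite Cv_shift // Cv_suml //.
rewrite hEX expr2 mul0r add0r -big_split /=; apply: eq_bigr => A hA.
rewrite Cv_sumr //.
rewrite (eq_bigr _ (fun B hB => hXAB A B hA hB)) big_split /=.
by rewrite sum_delta hA.
Qed.

End Model.

Section Model2.
Context {d : measure_display} {Omega : measurableType d} {R : realType}.
Context (P : probability Omega R) {S : finType} {N : nat} (yh : 'I_N -> {set S}).
Context (theta : S -> Omega -> R) (eps : 'I_N -> S -> Omega -> R).
Context (mu tau : R) (sigma : S -> S -> R).
Local Notation L2 := (Lfun P 2%:E).
Local Notation Cv := (Cv P).
Local Notation Ev := (Ev P).
Context (hth2 : forall s, theta s \in L2)
  (hep2 : forall n s, s \in yh n -> eps n s \in L2)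
  (hEth : forall s, Ev (theta s) = mu)
  (hCth : forall s t, Cv (theta s) (theta t) = if s == t then tau ^+ 2 else 0)
  (hEep : forall n s, s \in yh n -> Ev (eps n s) = 0)
  (hCep : forall n m s t, s \in yh n -> t \in yh m ->
      Cv (eps n s) (eps m t) = if n == m then sigma s t else 0)
  (hCte : forall n s t, s \in yh n -> Cv (theta t) (eps n s) = 0).

Ltac side := first [ by [] | by move=> *; apply: hep2 | by move=> *; apply: L2_scale
  | by move=> *; apply: L2_sum => *; exact: hep2 | exact: hth2 ].

Lemma card_sum1 (p : pred 'I_N) : (#|[set n | p n]|)%:R = \sum_(n | p n) 1 :> R.
Proof.
rewrite [RHS](eq_bigl (fun n => n \in [set n | p n])); last by move=> n; rewrite inE.
by rewrite sumr_const.
Qed.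

Lemma part2 (y : {set S}) (delta : {set {set S}}) (phid : nat -> R) :
  risk P (route_est yh delta phid y mu theta eps) theta y =
  ((phid (Mdel yh delta) / (Mdel yh delta)%:R) ^+ 2
        * (\sum_(s in Sdel delta) \sum_(t in Sdel delta)
             (Ndel2 yh delta s t)%:R * sigma s t)
      + (phid (Mdel yh delta) * (ybar yh delta - #|y|%:R) * mu) ^+ 2
      + \sum_(s in Sdel delta :\: y)
          (phid (Mdel yh delta) * (Ndel1 yh delta s)%:R / (Mdel yh delta)%:R) ^+ 2 * tau ^+ 2
      + \sum_(s in y)
          (1 - phid (Mdel yh delta) * (Ndel1 yh delta s)%:R / (Mdel yh delta)%:R) ^+ 2 * tau ^+ 2)%:E.
Proof.
pose ph := phid (Mdel yh delta).
pose M : R := (Mdel yh delta)%:R.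
pose k := ph / M.
pose Nd := fun s => (Ndel1 yh delta s)%:R : R.
pose kap := fun s => k * Nd s - (s \in y)%:R.
pose Tht := fun w => \sum_s kap s * theta s w.
pose E := fun w => \sum_(n | yh n \in delta) \sum_(s in yh n) eps n s w.
pose a := (1 - ph) * #|y|%:R * mu.
pose X := fun w => a + (Tht w + k * E w).
have hSdel : forall n s, yh n \in delta -> s \in yh n -> s \in Sdel delta.
  by move=> n s hd hs; apply/finset.bigcupP; exists (yh n).
have hNd : forall s, Nd s = \sum_(n | (yh n \in delta) && (s \in yh n)) 1.
  by move=> s; rewrite /Nd /Ndel1 card_sum1.
have hNd0 : forall s, s \notin Sdel delta -> Nd s = 0.
  move=> s hs; rewrite hNd big1 // => n /andP[hd hn].
  by move: hs; rewrite (hSdel n s hd hn).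
have hexch : forall f : S -> R,
    \sum_(n | yh n \in delta) \sum_(s in yh n) f s = \sum_s Nd s * f s.
  move=> f.
  under eq_bigr => n _ do rewrite big_mkcond /=.
  rewrite exchange_big /=; apply: eq_bigr => s _.
  rewrite hNd mulr_suml big_mkcondr /=; apply: eq_bigr => n _.
  by case: ifP => _; rewrite ?mul1r.
have hsumy : forall f : S -> R, \sum_(s in y) f s = \sum_s (s \in y)%:R * f s.
  move=> f; rewrite big_mkcond; apply: eq_bigr => s _.
  by case: (s \in y); [rewrite mul1r|rewrite mul0r].
have L2E : E \in L2.
  apply: L2_sum => n _; apply: L2_sum => s hs; exact: hep2.
have L2T : Tht \in L2.
  by apply: L2_sum => s _; apply: L2_scale.
have L2Y : (fun w => Tht w + k * E w) \in L2.
  by apply: L2_add => //; apply: L2_scale.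
have L2X : X \in L2 by apply: L2_add => //; exact: L2_cst.
have hpt : forall w, route_est yh delta phid y mu theta eps w
                     - \sum_(s in y) theta s w = X w.
  move=> w; rewrite /route_est /Tobs.
  under eq_bigr => n _ do rewrite big_split /=.
  rewrite big_split /= (hexch (fun s => theta s w)) (hsumy (fun s => theta s w)) /X.
  have -> : Tht w = k * (\sum_s Nd s * theta s w) - \sum_s (s \in y)%:R * theta s w.
    rewrite /Tht mulr_sumr -sumrB; apply: eq_bigr => s _; rewrite /kap; ring.
  rewrite /a /k /ph /M /E; ring.
rewrite /risk.
have -> : (fun w : Omega => (route_est yh delta phid y mu theta eps w
              - \sum_(s in y) theta s w) ^+ 2) = (fun w => (X w) ^+ 2).
  by apply/funext => w; rewrite hpt.
rewrite E_sq //; congr EFin.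
have hEE : Ev E = 0.
  rewrite /E Ev_sum; last by move=> n _; apply: L2_sum => s hs; exact: hep2.
  apply: big1 => n _; rewrite Ev_sum; last by move=> s hs; exact: hep2.
  by apply: big1 => s hs; exact: hEep.
have hET : Ev Tht = \sum_s kap s * mu.
  rewrite /Tht Ev_sum; last by move=> s _; apply: L2_scale.
  by apply: eq_bigr => s _; rewrite EvZ // hEth.
have hSN : \sum_s Nd s = \sum_(n | yh n \in delta) #|yh n|%:R.
  transitivity (\sum_s Nd s * 1); first by apply: eq_bigr => s _; rewrite mulr1.
  rewrite -(hexch (fun _ => 1)); apply: eq_bigr => n _; by rewrite sumr_const.
have hSy : \sum_s (s \in y)%:R = #|y|%:R :> R.
  transitivity (\sum_s (s \in y)%:R * (1 : R)); first by apply: eq_bigr => s _; rewrite mulr1.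
  by rewrite -(hsumy (fun _ => 1)) sumr_const.
have hEX : Ev X = ph * (ybar yh delta - #|y|%:R) * mu.
  rewrite /X EvD //; last exact: L2_cst.
  rewrite Ev_cst EvD //; last by apply: L2_scale.
  rewrite EvZ // hEE hET.
  have -> : \sum_s kap s * mu = (k * \sum_s Nd s - \sum_s (s \in y)%:R) * mu.
    rewrite -mulr_suml mulr_sumr -sumrB; congr (_ * _); apply: eq_bigr => s _; by [].
  rewrite hSN hSy /ybar /a /k /ph /M; ring.
have hCTT : Cv Tht Tht = \sum_s kap s ^+ 2 * tau ^+ 2.
  rewrite /Tht Cv_suml //; try side.
  apply: eq_bigr => s _; rewrite CvZl //.
  rewrite Cv_sumr //; try side.
  have -> : \sum_t Cv (theta s) (fun w => kap t * theta t w)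
          = \sum_t (if s == t then kap t * tau ^+ 2 else 0).
    apply: eq_bigr => t _; rewrite CvZr // hCth.
    by case: eqP => _; [|rewrite mulr0].
  rewrite sum_delta /=; ring.
have hCTE : Cv Tht E = 0.
  rewrite /Tht Cv_suml //; try side.
  apply: big1 => s _; rewrite CvZl //.
  rewrite /E Cv_sumr //; try side.
  rewrite big1 ?mulr0 // => n _.
  rewrite Cv_sumr //; try side.
  by apply: big1 => t ht; exact: hCte.
have hCEE : Cv E E = \sum_(n | yh n \in delta) \sum_(s in yh n) \sum_(t in yh n) sigma s t.
  rewrite {1}/E Cv_suml //; try side.
  apply: eq_bigr => n hn.
  rewrite Cv_suml //; try side.
  apply: eq_bigr => s hs.
  rewrite /E Cv_sumr //; try side.
  have -> : \sum_(m | yh m \in delta) Cv (eps n s) (fun w => \sum_(t in yh m) eps m t w)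
      = \sum_(m | yh m \in delta) if n == m then \sum_(t in yh n) sigma s t else 0.
    apply: eq_bigr => m hm.
    rewrite Cv_sumr //; try side.
    under eq_bigr => t ht do rewrite (hCep _ _ _ _ hs ht).
    by case: eqP => [<-|_] //; rewrite big1.
  by rewrite sum_delta hn.
have hE2 : \sum_(s in Sdel delta) \sum_(t in Sdel delta) (Ndel2 yh delta s t)%:R * sigma s t
         = \sum_(n | yh n \in delta) \sum_(s in yh n) \sum_(t in yh n) sigma s t.
  have L : \sum_(s in Sdel delta) \sum_(t in Sdel delta) (Ndel2 yh delta s t)%:R * sigma s t
      = \sum_s \sum_t \sum_n
          (if [&& yh n \in delta, s \in yh n & t \in yh n] then sigma s t else 0).
    rewrite big_mkcond; apply: eq_bigr => s _.
    case hS: (s \in Sdel delta); last first.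
      apply/esym; apply: big1 => t _; apply: big1 => n _.
      case: ifP => // /and3P[hd hs _]; by rewrite (hSdel n s hd hs) in hS.
    rewrite big_mkcond; apply: eq_bigr => t _.
    case hT: (t \in Sdel delta); last first.
      apply/esym; apply: big1 => n _.
      case: ifP => // /and3P[hd _ ht]; by rewrite (hSdel n t hd ht) in hT.
    rewrite /Ndel2 card_sum1 mulr_suml big_mkcond /=; apply: eq_bigr => n _.
    by case: ifP => _; [rewrite mul1r|].
  have Rr : \sum_(n | yh n \in delta) \sum_(s in yh n) \sum_(t in yh n) sigma s t
      = \sum_n \sum_s \sum_t
          (if [&& yh n \in delta, s \in yh n & t \in yh n] then sigma s t else 0).
    rewrite big_mkcond; apply: eq_bigr => n _.
    case hd: (yh n \in delta) => /=; last first.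
      by apply/esym; apply: big1 => s _; apply: big1.
    rewrite big_mkcond; apply: eq_bigr => s _.
    case hs: (s \in yh n) => /=; last by apply/esym; apply: big1.
    by rewrite big_mkcond.
  rewrite L Rr.
  under eq_bigr => s _ do rewrite exchange_big.
  by rewrite exchange_big.
have hK : \sum_s kap s ^+ 2 * tau ^+ 2 =
    \sum_(s in Sdel delta :\: y)
          (phid (Mdel yh delta) * (Ndel1 yh delta s)%:R / (Mdel yh delta)%:R) ^+ 2 * tau ^+ 2
      + \sum_(s in y)
          (1 - phid (Mdel yh delta) * (Ndel1 yh delta s)%:R / (Mdel yh delta)%:R) ^+ 2 * tau ^+ 2.
  rewrite (bigID (fun s => s \in y)) /= addrC; congr (_ + _).
    rewrite big_mkcond [RHS]big_mkcond; apply: eq_bigr => s _.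
    rewrite finset.in_setD.
    case hy: (s \in y) => //=.
    case hS: (s \in Sdel delta) => /=.
      rewrite /kap hy /k /ph /M /Nd /=; ring.
    rewrite /kap hy hNd0 ?hS //= /Nd.
    ring.
  apply: eq_big => [s|s hs] //.
  rewrite /kap hs /k /ph /M /Nd /=; ring.
rewrite hEX Cv_shift // CvDl //; last by apply: L2_scale.
rewrite CvDr //; last by apply: L2_scale.
rewrite CvDr //; last by apply: L2_scale.
rewrite !CvZl //; last by apply: L2_scale.
rewrite !CvZr //.
rewrite hCTT hCTE (CvC P E Tht) hCTE hCEE -hE2 hK.
rewrite /k /ph /M; ring.
all: by apply: L2_scale.
Qed.

End Model2.

Theorem proposition2p3
  (d : measure_display) (Omega : measurableType d) (R : realType)
  (P : probability Omega R)
  (S : finType) (N : nat) (yh : 'I_N -> {set S})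
  (theta : S -> Omega -> R) (eps : 'I_N -> S -> Omega -> R)
  (mu tau : R) (sigma : S -> S -> R) (y : {set S}) :
  (forall n, yh n != finset.set0) ->
  moment_model P yh theta eps mu tau sigma ->
  (* (1) generalized segment-based estimator *)
  (forall (Sy : {set {set S}}) (phi : {set S} -> nat -> R),
     finset.partition Sy y ->
     (forall A, A \in Sy -> phi A 0%N = 0) ->
     risk P (gseg_est yh Sy phi mu theta eps) theta y =
     (\sum_(A in Sy) \sum_(B in Sy)
        ((NS yh (A :|: B))%:R / ((NS yh A)%:R * (NS yh B)%:R)
         * phi A (NS yh A) * phi B (NS yh B)
         * (\sum_(s in A) \sum_(t in B) sigma s t))
      + \sum_(A in Sy) (1 - phi A (NS yh A)) ^+ 2 * #|A|%:R * tau ^+ 2)%:E)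
  /\
  (* (2) route-based estimator *)
  (forall (delta : {set {set S}}) (phid : nat -> R),
     (forall y', y' \in delta -> exists n, yh n = y') ->
     phid 0%N = 0 ->
     let ph := phid (Mdel yh delta) in
     let M := (Mdel yh delta)%:R in
     risk P (route_est yh delta phid y mu theta eps) theta y =
     ((ph / M) ^+ 2
        * (\sum_(s in Sdel delta) \sum_(t in Sdel delta)
             (Ndel2 yh delta s t)%:R * sigma s t)
      + (ph * (ybar yh delta - #|y|%:R) * mu) ^+ 2
      + \sum_(s in Sdel delta :\: y) (ph * (Ndel1 yh delta s)%:R / M) ^+ 2 * tau ^+ 2
      + \sum_(s in y) (1 - ph * (Ndel1 yh delta s)%:R / M) ^+ 2 * tau ^+ 2)%:E).
Proof.
move=> _ hm; case: hm => h1 [h2 [h3 [h4 [h5 [h6 [h7 [h8 h9]]]]]]].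
have hEth : forall s, Ev P (theta s) = mu by move=> s; rewrite /Ev h3.
have hCth : forall s t, Cv P (theta s) (theta t) = if s == t then tau ^+ 2 else 0.
  move=> s t; rewrite /Cv; case: eqP => [<-|/eqP nst]; first by rewrite h4.
  by rewrite h5.
have hEep : forall n s, s \in yh n -> Ev P (eps n s) = 0.
  by move=> n s hs; rewrite /Ev h6.
have hCep : forall n m s t, s \in yh n -> t \in yh m ->
    Cv P (eps n s) (eps m t) = if n == m then sigma s t else 0.
  move=> n m s t hs ht; rewrite /Cv; case: eqP => [eqnm|/eqP nm].
    by subst m; rewrite h7.
  by rewrite h8.
have hCte : forall n s t, s \in yh n -> Cv P (theta t) (eps n s) = 0.
  by move=> n s t hs; rewrite /Cv h9.
split.
  move=> Sy phi hp h0.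
  exact: (part1 P yh theta eps mu tau sigma h1 h2 hEth hCth hEep hCep hCte y Sy phi hp h0).
move=> delta phid _ _ /=.
exact: (part2 P yh theta eps mu tau sigma h1 h2 hEth hCth hEep hCep hCte y delta phid).
Qed.
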